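(* Let $k\ge1$ and let $p_1<p_2<\dots<p_k$ be odd primes, $n=p_1\cdots p_k$. Then $$\prod_{i=1}^{k-2}p_i^{2^{k-i-1}-1}\le \varphi(n)^{2^{k-1}/k-1}.$$
   Context: $\varphi$ is Euler's totient function; an empty product equals $1$. *)

(* Defs.v *)
From Stdlib Require Import Reals.
From mathcomp Require Import all_boot.

(* Main.v *)
Require Import Defs.
From Stdlib Require Import Reals.
From mathcomp Require Import all_boot.
From Stdlib Require Import Lia Lra.


Ltac tonat := repeat match goal with
  | H : is_true (_ <= _) |- _ => apply (elimT leP) in H
  end; try apply/leP;
  repeat match goal with H : (_ <= _)%coq_nat |- _ => revert H | H : @eq nat _ _ |- _ => revert H end;
  rewrite -?plusE -?minusE -?multE; intros.

Lemma key r d : 1 <= r -> (r+2+d) * (2^r - 1) <= r * 2^(r+2+d-1).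
Proof.
move=> r1; have X2 : 2 <= 2^r by rewrite -{1}(expn1 2) leq_exp2l.
elim: d => [|d IH].
  rewrite addn0 -addnBA // expnD expn1.
  case: r r1 X2 => [//|[|r]] _ X2; first by [].
  move: X2; set X := 2^ _; move=> X2. tonat. nia.
rewrite addnS subSS subn0.
have n2 : 2 <= r + 2 + d by rewrite -addnA addnC -addnA leq_addr.
have E0 : r + 2 + d = (r + 2 + d - 1).+1 by rewrite subn1 prednK // (leq_trans _ n2).
rewrite E0 in IH *. rewrite ?subSS ?subn0 expnS in IH *.
move: IH; set n0 := r + 2 + d - 1; set Y := 2^ _; set X := 2^r; move=> IH. tonat. nia.
Qed.

Lemma cube q : 2 <= q -> q.+1 ^ 3 <= q * (q+2) * (q+4).
Proof. move=> h; rewrite !expnS expn0 muln1. tonat. nia. Qed.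

Lemma prodXn (m n z : nat) F : (\prod_(m<=i<n) F i)^z = \prod_(m<=i<n) F i ^ z.
Proof. by elim/big_rec2: _ => [|i a b _ <-]; [rewrite exp1n | rewrite expnMn]. Qed.

Lemma tailS k m : m <= k -> \sum_(m <= j < k) (2^(k-j-1)-1) + (k - m) + 1 = 2^(k-m).
Proof.
move Ht : (k - m) => t; elim: t m Ht => [|t IH] m Ht mk.
  by rewrite big_geq // -subn_eq0 Ht.
have mk' : m < k by rewrite -subn_gt0 Ht.
rewrite big_ltn // .
have := IH m.+1; rewrite subnS Ht /= => /(_ erefl mk') H.
rewrite subSS subn0.
have X1 : 1 <= 2^t by rewrite expn_gt0.
move: H X1; rewrite expnS; set X := 2^t; set S := \sum_(_ <= _ < _) _; move=> H X1.
tonat. lia.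
Qed.


Lemma abel (z : nat -> nat) (N : nat) : forall n a (w u : nat -> nat),
 N - a = n ->
 (forall j, a <= j -> j.+1 < N -> z j <= z j.+1) ->
 (forall j, a <= j -> j < N -> 0 < z j) ->
 (forall m, a <= m -> \sum_(m <= j < N) w j <= \sum_(m <= j < N) u j) ->
 \prod_(a <= j < N) z j ^ w j <= \prod_(a <= j < N) z j ^ u j.
Proof.
elim=> [|n IH] a w u Hn Hz Hpos Hs.
  by rewrite !big_geq // -subn_eq0 Hn.
have aN : a < N by rewrite -subn_gt0 Hn.
rewrite !(big_ltn aN).
have za : 0 < z a by apply: Hpos.
case: (leqP (w a) (u a)) => Hwu.
  apply: leq_mul; first exact: leq_pexp2l.
  apply: IH => //; first by rewrite subnS Hn.
  - by move=> j Hj; apply: Hz; apply: ltnW.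
  - by move=> j Hj; apply: Hpos; apply: ltnW.
  - by move=> m Hm; apply: Hs; apply: ltnW.
have a1N : a.+1 < N.
  rewrite ltn_neqAle aN andbT; apply/negP => /eqP E.
  have := Hs a (leqnn a); rewrite !(big_ltn aN) E !big_geq // !addn0.
  by rewrite leqNgt Hwu.
set d := w a - u a.
set w' := fun j => if j == a.+1 then w j + d else w j.
have E1 : z a ^ w a = z a ^ u a * z a ^ d by rewrite -expnD subnKC // ltnW.
rewrite E1 -mulnA; apply: leq_mul => //.
apply: (@leq_trans (\prod_(a.+1 <= j < N) z j ^ w' j)).
  rewrite !(big_ltn a1N) /w' eqxx mulnA expnD.
  rewrite (mulnC (z a ^ d)); apply: leq_mul; first apply: leq_mul => //.
    by rewrite leq_exp2r ?subn_gt0 //; apply: Hz.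
  rewrite leq_eqVlt; apply/orP; left; apply/eqP; apply: eq_big_nat => j /andP[Hj _].
  by rewrite (gtn_eqF Hj).
apply: IH => //; first by rewrite subnS Hn.
- by move=> j Hj; apply: Hz; apply: ltnW.
- by move=> j Hj; apply: Hpos; apply: ltnW.
move=> m Hm; case: (eqVneq m a.+1) => [->|ne].
  have := Hs a (leqnn a); rewrite !(big_ltn aN) !(big_ltn a1N) /w' eqxx.
  have -> : \sum_(a.+2 <= j < N) (if j == a.+1 then w j + d else w j) = \sum_(a.+2 <= j < N) w j.
    by apply: eq_big_nat => j /andP[Hj _]; rewrite (gtn_eqF Hj).
  rewrite /d; move: Hwu; set A := \sum_(a.+2 <= j < N) w j; set B := \sum_(a.+2 <= j < N) u j.
  move=> /ltP h1 /leP h2; apply/leP; rewrite -?plusE -?minusE in h1 h2 *; lia.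
have Hm2 : a.+1 < m by rewrite ltn_neqAle eq_sym ne Hm.
rewrite (@eq_big_nat _ _ _ _ _ _ w); first by apply: Hs; apply: ltnW; apply: ltnW.
by move=> j /andP[Hj _]; rewrite /w' gtn_eqF // (leq_trans Hm2 Hj).
Qed.


Lemma chain (k : nat) (p : nat -> nat) (hincr : forall i, 1 <= i < k -> p i < p i.+1) :
  forall i j, 1 <= i -> i < j -> j <= k -> p i < p j.
Proof.
move=> i j i1; elim: j => [//|j IH] ij jk.
rewrite ltnS leq_eqVlt in ij; case/orP: ij => [/eqP E|ij].
  by subst j; apply: hincr; rewrite i1.
apply: ltn_trans (IH ij (ltnW jk)) (hincr j _).
by rewrite jk (leq_trans i1 (ltnW ij)).
Qed.

Lemma coprime_prod (p : nat -> nat) N : (forall i, 1<=i<=N -> prime (p i)) ->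
  (forall i, 1 <= i < N -> p i < p N) -> forall M, M <= N ->
  coprime (\prod_(1<=i<M) p i) (p N).
Proof.
move=> hp hl; elim=> [|M IH] MN; first by rewrite big_geq // coprime1n.
case: M IH MN => [|M] IH MN; first by rewrite big_geq // coprime1n.
rewrite big_nat_recr // coprimeMl IH ?(ltnW MN) //=.
have hM : prime (p M.+1) by apply: hp; apply/andP; split => //; exact: ltnW.
have hN : prime (p N) by apply: hp; rewrite leqnn andbT (leq_trans _ MN).
by rewrite prime_coprime // dvdn_prime2 // ltn_eqF // hl.
Qed.

Lemma totient_prod (p : nat -> nat) N : (forall i, 1<=i<N -> prime (p i)) ->
  (forall i j, 1<=i -> i<j -> j<N -> p i < p j) ->
  totient (\prod_(1<=i<N) p i) = \prod_(1<=i<N) (p i).-1.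
Proof.
elim: N => [|N IH] hp hl; first by rewrite !big_geq.
case: N IH hp hl => [|N] IH hp hl; first by rewrite !big_geq.
rewrite big_nat_recr // [in RHS]big_nat_recr // totient_coprime.
  rewrite IH; first by rewrite totient_prime //; apply: hp; rewrite leqnn.
    by move=> i /andP[i1 i2]; apply: hp; rewrite i1 ltnW.
  by move=> i j i1 ij jN; apply: hl => //; apply: ltnW.
apply: coprime_prod => // i /andP[i1 i2];
  first [ by apply: hl | by apply: hp; rewrite i1 ].
Qed.


Lemma pow_gt k : 3 <= k -> k < 2^(k-1).
Proof.
elim: k => [//|k IH] hk.
case: (ltngtP k 2) => [k2|k2|->//].
  by move: hk; rewrite ltnS leqNgt k2.
have := IH k2; rewrite subSS subn0.
rewrite -[in X in _ -> _ < X](prednK (ltnW (ltnW k2))) expnS subn1.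
move: (2 ^ k.-1) => X hX. tonat. lia.
Qed.

Lemma six k : 3 <= k -> 6 * 2^(k-2) <= k * 2^(k-2) + 2*k.
Proof.
move=> hk; case: (leqP 6 k) => h.
  by apply: leq_trans (leq_addr _ _); rewrite leq_mul2r h orbT.
by case: k hk h => [|[|[|[|[|[|k]]]]]].
Qed.

Lemma step1 k (p : nat -> nat) (hk : 3 <= k)
  (hprime : forall i : nat, (1 <= i <= k)%N -> prime (p i) /\ odd (p i))
  (hincr : forall i : nat, (1 <= i < k)%N -> (p i < p i.+1)%N) :
  (\prod_(1 <= i < k.-1) p i ^ (2 ^ (k - i - 1) - 1))^k
   <= (\prod_(1<=i<k.+1) (p i).-1)^(2^(k-1)-k).
Proof.
have hp i : 1 <= i <= k -> prime (p i) by move=> h; case: (hprime i h).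
have hpos i : 1 <= i <= k -> 0 < p i by move=> h; apply: prime_gt0; apply: hp.
have hgap i : 1 <= i < k -> (p i).+2 <= p i.+1.
  move=> h; have := hincr i h; rewrite leq_eqVlt => /orP[/eqP E|//].
  have hi : 1 <= i <= k by case/andP: h => -> /ltnW ->.
  have hi1 : 1 <= i.+1 <= k by case/andP: h => _ ->.
  have o1 := (hprime i hi).2; have o2 := (hprime i.+1 hi1).2.
  by move: o2; rewrite -E /= o1.
have p13 : 3 <= p 1.
  have [pr o] : prime (p 1) /\ odd (p 1) by apply: hprime; rewrite (leq_trans _ hk).
  have := prime_gt1 pr; rewrite leq_eqVlt => /orP[/eqP E|//].
  by rewrite -E in o.
set E := 2^(k-1) - k.
have k0 : 0 < k by apply: leq_trans hk.
have L1 : \prod_(1 <= i < k.-1) p i ^ (2 ^ (k - i - 1) - 1)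
        = \prod_(1 <= i < k) p i ^ (2 ^ (k - i - 1) - 1).
  have -> : \prod_(1 <= i < k) p i ^ (2 ^ (k - i - 1) - 1)
         = \prod_(1 <= i < k.-1.+1) p i ^ (2 ^ (k - i - 1) - 1) by rewrite prednK.
  rewrite big_nat_recr /=; last by rewrite -ltnS prednK // (leq_trans _ hk).
  have -> : k - k.-1 - 1 = 0 by case: k hk {E hp hpos hgap hprime hincr k0 p13} => //= k' _; rewrite subSn // subnn.
  by rewrite expn0 subnn expn0 muln1.
rewrite L1 prodXn.
under eq_bigr do rewrite -expnM.
apply: leq_trans (abel p k (k - 1) 1
   (fun j => (2 ^ (k - j - 1) - 1) * k)
   (fun j => if j == 1 then 3 * E else if j == 2 then 0 else E) _ _ _ _) _.
- by [].
- move=> j j1 jk; apply: ltnW; apply: hincr; by rewrite j1 (ltnW jk).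
- move=> j j1 jk; apply: hpos; by rewrite j1 (ltnW jk).
- move=> m m1.
  case: (leqP k m) => km; first by rewrite !big_geq.
  rewrite -big_distrl /=.
  have T := @tailS k m (ltnW km).
  move: T; move: (\sum_(m <= j < k) (2 ^ (k - j - 1) - 1)) => S T.
  have U3 : forall m', 3 <= m' -> \sum_(m' <= j < k) (if j == 1 then 3 * E else if j == 2 then 0 else E) = (k - m') * E.
    move=> m' h; rewrite -sum_nat_const_nat; apply: eq_big_nat => j /andP[hj _].
    by rewrite !gtn_eqF // (leq_trans _ (leq_trans h hj)).
  have Ek : k < 2^(k-1) := @pow_gt k hk.
  case: m m1 km T => [//|[|[|m]]] _ km T.
  + rewrite big_ltn // big_ltn ?(leq_trans _ hk) //= U3 // /E.
    move: T Ek; move: (2^(k-1)) => X T Ek. tonat. nia.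
  + rewrite big_ltn //= U3 // /E.
    have Z2 : 2^(k-1) = 2 * 2^(k-2).
      by rewrite -expnS; congr (2 ^ _); case: k hk {km T U3 Ek E L1 hp hpos hgap hprime hincr k0 p13} => [|[|[|k]]].
    have S6 := @six k hk.
    rewrite Z2; move: T S6; move: (2^(k-2)) => X T S6. tonat. nia.
  + rewrite U3 // /E.
    set r := k - m.+3.
    have r1 : 1 <= r by rewrite subn_gt0.
    have K := @key r m.+1 r1.
    have e : r + 2 + m.+1 = k by rewrite /r; tonat; lia.
    rewrite e in K; rewrite -/r in T *.
    have X1 : 1 <= 2 ^ r by rewrite expn_gt0.
    move: T Ek K X1; move: (2^(k-1)) (2^r) => Y X T Ek K X1; clearbody r. tonat. nia.
have k1 : 1 < k by apply: leq_trans hk.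
rewrite [X in X <= _](big_ltn k1) [X in _ * X <= _](big_ltn hk) /=.
rewrite (@eq_big_nat _ _ _ 3 k _ (fun j => p j ^ E)); last first.
  by move=> j /andP[j3 _]; rewrite !gtn_eqF // (leq_trans _ j3).
rewrite -prodXn expn0 mul1n mulnC expnM -expnMn.
have E0 : 0 < E by rewrite /E subn_gt0 pow_gt.
rewrite leq_exp2r //.
have HR : \prod_(1<=i<k.+1) (p i).-1 = (p 1).-1 * (p 2).-1 * (p 3).-1 * \prod_(4<=i<k.+1) (p i).-1.
  rewrite big_ltn // big_ltn ?(leq_trans _ hk) // big_ltn ?ltnS ?(ltnW hk) //.
  by rewrite !mulnA.
rewrite HR [X in X <= _]mulnC; apply: leq_mul.
  have g1 := hgap 1 (leq_trans (isT : 1 < 3) hk); have g2 := hgap 2 hk.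
  have c := @cube (p 1).-1; rewrite prednK ?(leq_trans _ p13) // in c.
  apply: leq_trans (c _) _; first by tonat; lia.
  apply: leq_mul; first apply: leq_mul => //.
    by tonat; lia.
  by tonat; lia.
rewrite [X in _ <= X]big_add1 /= big_nat_cond [X in _ <= X]big_nat_cond.
apply: leq_prod => i /andP[/andP[i3 ik] _].
have hi : 1 <= i < k by rewrite ik (leq_trans _ i3).
rewrite -ltnS prednK; first exact: hincr.
by apply: leq_ltn_trans (hincr i hi).
Qed.

Lemma INR_expn m n : INR (m ^ n) = pow (INR m) n.
Proof.
elim: n => [|n IH]; first by rewrite expn0.
by rewrite expnS -multE mult_INR IH /=.
Qed.

Theorem theorem4 (k : nat) (p : nat -> nat)
  (hk : (1 <= k)%N)
  (hprime : forall i : nat, (1 <= i <= k)%N -> prime (p i) /\ odd (p i))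
  (hincr : forall i : nat, (1 <= i < k)%N -> (p i < p i.+1)%N) :
  let n := (\prod_(1 <= i < k.+1) p i)%N in
  Rle (INR (\prod_(1 <= i < k.-1) p i ^ (2 ^ (k - i - 1) - 1))%N)
      (Rpower (INR (totient n))
              (Rminus (Rdiv (INR (2 ^ (k - 1))%N) (INR k)) R1)).
Proof.
move=> n.
have hp i : 1 <= i <= k -> prime (p i) by move=> h; case: (hprime i h).
have hn : totient n = \prod_(1<=i<k.+1) (p i).-1.
  apply: totient_prod; first by move=> i h; apply: hp.
  by move=> i j i1 ij jk; exact: (@chain k p hincr i j i1 ij jk).
set L := \prod_(1 <= i < k.-1) p i ^ (2 ^ (k - i - 1) - 1).
set E := 2 ^ (k - 1) - k.
have Phipos : 0 < totient n.
  rewrite hn big_nat_cond; apply: prodn_cond_gt0 => i /andP[/andP[i1 ik] _].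
  by rewrite -ltnS prednK ?prime_gt1 ?prime_gt0 //; apply: hp; rewrite i1.
have Lpos : 0 < L.
  rewrite /L big_nat_cond; apply: prodn_cond_gt0 => i /andP[/andP[i1 ik] _].
  rewrite expn_gt0 prime_gt0 //; apply: hp; rewrite i1 /=.
  by apply: leq_trans (ltnW ik) _; rewrite leq_pred.
have Hnat : L ^ k <= totient n ^ E.
  case: (leqP k 2) => k2.
    rewrite /L big_geq ?exp1n ?expn_gt0 ?Phipos //.
    by rewrite -subn1 leq_subLR.
  by rewrite hn; apply: step1.
have Ek : k <= 2 ^ (k - 1).
  have := ltn_expl (k - 1) (isT : 1 < 2).
  by rewrite subn1 prednK.
have kR : Rlt 0 (INR k) by apply: lt_0_INR; apply/ltP.
have hexp : Rminus (Rdiv (INR (2 ^ (k - 1))) (INR k)) R1 = Rdiv (INR E) (INR k).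
  rewrite /E -minusE minus_INR; last by apply/leP.
  field; lra.
rewrite hexp.
apply: Rnot_lt_le => H.
set X := Rpower _ _ in H.
have Xpos : Rlt 0 X by rewrite /X /Rpower; apply: exp_pos.
have := Rlt_Rpower_l X (INR L) (INR k) kR (conj Xpos H).
rewrite /X Rpower_mult.
have -> : Rmult (Rdiv (INR E) (INR k)) (INR k) = INR E by field; lra.
have P0 : Rlt 0 (INR (totient n)) by apply: lt_0_INR; apply/ltP.
have L0 : Rlt 0 (INR L) by apply: lt_0_INR; apply/ltP.
rewrite Rpower_pow // Rpower_pow // -!INR_expn => /INR_lt /ltP.
by rewrite ltnNge Hnat.
Qed.
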